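(* (a) For every $n$-variable symmetric Boolean function $f$ it holds that $NN(f)\le n+1$. (b) For the $n$-variable parity function, $BNN(x_1\oplus x_2\oplus\cdots\oplus x_n)=2^n$.
   Context: For a Boolean function $f:\{0,1\}^n\to\{0,1\}$, points $a$ with $f(a)=1$ are positive and those with $f(a)=0$ negative. A nearest neighbor representation of $f$ is a pair of disjoint sets $(P,N)$ of points of $\mathbb R^n$ (positive and negative prototypes) such that for every $a\in\{0,1\}^n$: if $a$ is positive, there is $b\in P$ with $d(a,b)<d(a,c)$ for all $c\in N$; if $a$ is negative, there is $b\in N$ with $d(a,b)<d(a,c)$ for all $c\in P$. Here $d$ is the Euclidean distance. The size of the representation is $|P\cup N|$. $NN(f)$ is the minimum size of a nearest neighbor representation of $f$; $BNN(f)$ is the minimum size of such a representation with $P\cup N\subseteq\{0,1\}^n$ (Boolean prototypes). A Boolean function is symmetric if its value depends only on the weight (number of 1 components) of its input. *)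

(* Defs.v *)
From mathcomp Require Import all_boot all_order all_algebra.
From mathcomp Require Import boolp Rstruct.
From Stdlib Require Import Reals.
Set Implicit Arguments. Unset Strict Implicit. Unset Printing Implicit Defensive.
Import Order.TTheory GRing.Theory Num.Theory.
Local Open Scope ring_scope.

Definition bvec (n : nat) := {ffun 'I_n -> bool}.

Definition pt (n : nat) := 'rV[R]_n.

Definition emb n (a : bvec n) : pt n := \row_i ((a i : nat)%:R).

Definition dist n (x y : pt n) : R := Num.sqrt (\sum_i (x 0 i - y 0 i) ^+ 2).

Definition weight n (a : bvec n) : nat := (\sum_i (a i : nat))%N.

Definition symmetric_fun n (f : bvec n -> bool) : Prop :=
  forall a b : bvec n, weight a = weight b -> f a = f b.

Definition parity n (a : bvec n) : bool := \big[addb/false]_i a i.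

(* (P, N) is a nearest neighbor representation of f; the finite sets of
   prototypes are given as duplicate-free sequences. *)
Definition NN_rep n (f : bvec n -> bool) (P N : seq (pt n)) : Prop :=
  [/\ uniq P, uniq N, ~~ has (mem N) P &
    forall a : bvec n,
      (f a -> exists2 b, b \in P & forall c, c \in N -> dist (emb a) b < dist (emb a) c) /\
      (~~ f a -> exists2 b, b \in N & forall c, c \in P -> dist (emb a) b < dist (emb a) c)].

(* size |P u N| = |P| + |N| since P, N are disjoint *)
Definition NN_size_ok n (f : bvec n -> bool) (k : nat) : Prop :=
  exists P N, NN_rep f P N /\ (size P + size N)%N = k.

Definition BNN_size_ok n (f : bvec n -> bool) (k : nat) : Prop :=
  exists P N, NN_rep f P N /\ (size P + size N)%N = k /\
    (forall b, b \in P ++ N -> exists a : bvec n, b = emb a).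

Lemma emb_inj n : injective (@emb n).
Proof.
move=> a b /matrixP H; apply/ffunP=> i; have := H 0 i; rewrite !mxE.
by case: (a i); case: (b i) => //= /eqP; rewrite ?oner_eq0 // eq_sym oner_eq0.
Qed.

Lemma dist_xx n (x : pt n) : dist x x = 0.
Proof. by rewrite /dist big1 ?sqrtr0 // => i _; rewrite subrr expr0n. Qed.

Lemma dist_gt0 n (x y : pt n) : x != y -> 0 < dist x y.
Proof.
move=> Hxy; rewrite /dist sqrtr_gt0 lt_def sumr_ge0 ?andbT; last by move=> i _; exact: sqr_ge0.
apply: contra Hxy => /eqP /psumr_eq0P H; apply/eqP/matrixP => i j.
have /(_ j isT) /eqP := H (fun k _ => sqr_ge0 _); rewrite [i]ord1.
by rewrite sqrf_eq0 subr_eq0 => /eqP.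
Qed.

Definition full_P n (f : bvec n -> bool) := [seq emb a | a <- enum (bvec n) & f a].
Definition full_N n (f : bvec n -> bool) := [seq emb a | a <- enum (bvec n) & ~~ f a].

Lemma full_rep n (f : bvec n -> bool) : NN_rep f (full_P f) (full_N f).
Proof.
have memP a : (emb a \in full_P f) = f a.
  by rewrite /full_P (mem_map (@emb_inj n)) mem_filter mem_enum andbT.
have memN a : (emb a \in full_N f) = ~~ f a.
  by rewrite /full_N (mem_map (@emb_inj n)) mem_filter mem_enum andbT.
split.
- by rewrite (map_inj_uniq (@emb_inj n)) filter_uniq // enum_uniq.
- by rewrite (map_inj_uniq (@emb_inj n)) filter_uniq // enum_uniq.
- apply/hasPn => x /mapP [a]; rewrite mem_filter => /andP [fa _] ->.
  by rewrite /= memN fa.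
- move=> a; split.
  + move=> fa; exists (emb a); first by rewrite memP.
    move=> c /mapP [a' ]; rewrite mem_filter => /andP [fa' _] ->.
    rewrite dist_xx dist_gt0 //; apply: contraNneq fa' => /emb_inj <-; by rewrite fa.
  + move=> fa; exists (emb a); first by rewrite memN.
    move=> c /mapP [a' ]; rewrite mem_filter => /andP [fa' _] ->.
    rewrite dist_xx dist_gt0 //; apply: contraNneq fa => /emb_inj ->; by [].
Qed.

Lemma BNN_exists n (f : bvec n -> bool) : exists k, asbool (BNN_size_ok f k).
Proof.
exists (size (full_P f) + size (full_N f))%N; apply/asboolP.
exists (full_P f), (full_N f); split; first exact: full_rep.
split=> // b; rewrite mem_cat => /orP [] /mapP [a _ ->]; by exists a.
Qed.

Lemma NN_exists n (f : bvec n -> bool) : exists k, asbool (NN_size_ok f k).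
Proof.
have [k /asboolP [P [N [H1 [H2 _]]]]] := BNN_exists f.
by exists k; apply/asboolP; exists P, N.
Qed.

Definition NN n (f : bvec n -> bool) : nat := ex_minn (NN_exists f).

Definition BNN n (f : bvec n -> bool) : nat := ex_minn (BNN_exists f).

(* Main.v *)
Require Import Defs.
From mathcomp Require Import all_boot all_order all_algebra.
From mathcomp Require Import boolp Rstruct.
From mathcomp Require Import ring.
Set Implicit Arguments. Unset Strict Implicit. Unset Printing Implicit Defensive.
Import Order.TTheory GRing.Theory Num.Theory.
Local Open Scope ring_scope.

Definition ham n (x y : bvec n) : nat := (\sum_i (x i != y i))%N.

Lemma dist_emb n (x y : bvec n) : dist (emb x) (emb y) = Num.sqrt (ham x y)%:R.
Proof.
rewrite /dist /ham natr_sum; congr Num.sqrt; apply: eq_bigr => i _; rewrite !mxE.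
by case: (x i); case: (y i) => /=; rewrite ?subrr ?expr0n ?subr0 ?sub0r ?sqrrN ?expr1n.
Qed.

Lemma ltdist n (x y z : bvec n) :
  (dist (emb x) (emb y) < dist (emb x) (emb z)) = (ham x y < ham x z)%N.
Proof.
rewrite !dist_emb; case E: (ham x z) => [|k].
  by rewrite ltn0 sqrtr0; apply/negbTE; rewrite -leNgt sqrtr_ge0.
by rewrite ltr_sqrt ?ltr0n // ltr_nat.
Qed.

Lemma cls n (f : bvec n -> bool) P N : NN_rep f P N -> forall a,
  exists2 b, b \in (if f a then P else N) &
    forall c, c \in (if f a then N else P) -> dist (emb a) b < dist (emb a) c.
Proof.
case=> _ _ _ H a; have [H1 H2] := H a; case E: (f a).
  exact: H1.
by apply: H2; rewrite E.
Qed.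

Lemma Qsub n (P N : seq (pt n)) (v : bool) x :
  x \in (if v then P else N) -> x \in P ++ N.
Proof. by case: v; rewrite mem_cat => ->; rewrite ?orbT. Qed.

Lemma ham_tri n (x y z : bvec n) : (ham x z <= ham x y + ham y z)%N.
Proof.
rewrite /ham -big_split /=; apply: leq_sum => i _.
by case: (x i); case: (y i); case: (z i).
Qed.

Lemma parity_ham n (x y : bvec n) : parity y = parity x (+) odd (ham x y).
Proof.
rewrite /ham (big_morph odd oddD (erefl (odd 0))) /parity -big_split /=.
by apply: eq_bigr => i _; case: (x i); case: (y i).
Qed.

Lemma parity_all n (P N : seq (pt n)) : NN_rep (@parity n) P N ->
  (forall b, b \in P ++ N -> exists a, b = emb a) -> forall a, emb a \in P ++ N.
Proof.
move=> rep bool a; apply/negPn/negP => Ha.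
have C := cls rep.
pose pr k := [exists a', (emb a' \in P ++ N) && (ham a a' == k)].
have exP : exists k, pr k.
  have [b /Qsub bin _] := C a; have [a0 e] := bool _ bin; subst b.
  by exists (ham a a0); apply/existsP; exists a0; rewrite bin eqxx.
case: (ex_minnP exP) => d /existsP [a' /andP [a'in /eqP had]] dmin.
have dminb : forall b', emb b' \in P ++ N -> (d <= ham a b')%N.
  by move=> b' hb; apply: dmin; apply/existsP; exists b'; rewrite hb eqxx.
have c1 : emb a' \in (if parity a then P else N).
  have [b bin bfar] := C a; have [b' e] := bool _ (Qsub bin); subst b.
  have : ~~ (emb a' \in (if parity a then N else P)).
    apply/negP => /bfar; rewrite ltdist had => lt.
    by have := dminb _ (Qsub bin); rewrite leqNgt lt.
  by move: a'in; rewrite mem_cat; case: (parity a) => /orP [] -> //.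
have c2 : parity a' = parity a.
  apply/eqP/negP => ne.
  have [b bin bfar] := C a'.
  have : emb a' \in (if parity a' then N else P).
    by move: c1 ne; case: (parity a); case: (parity a').
  move/bfar; rewrite dist_xx => lt.
  by move: lt; rewrite ltNge /dist sqrtr_ge0.
have [i Hi] : exists i, a i != a' i.
  case/boolP: [exists i, a i != a' i] => [/existsP [i Hi] | /existsPn H].
    by exists i.
  have eq : a = a' by apply/ffunP => j; apply/eqP; have := H j; rewrite negbK.
  by move: Ha; rewrite eq a'in.
pose a2 : bvec n := [ffun j => if j == i then ~~ a i else a j].
have h1 : ham a a2 = 1%N.
  rewrite /ham (bigD1 i) //= ffunE eqxx big1 => [|j ji]; first by case: (a i).
  by rewrite ffunE (negbTE ji) eqxx.
have h2 : ham a a' = (ham a2 a').+1.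
  rewrite /ham (bigD1 i) //= (bigD1 i (P:=xpredT)) //= ffunE eqxx Hi.
  have -> : (~~ a i != a' i) = false by move: Hi; case: (a i); case: (a' i).
  congr (_ .+1); apply: eq_bigr => j ji; by rewrite ffunE (negbTE ji).
have p2 : parity a2 = ~~ parity a by rewrite (parity_ham a a2) h1 addbT.
have [b bin bfar] := C a2.
have [b' e] := bool _ (Qsub bin); subst b.
have : emb a' \in (if parity a2 then N else P).
  by move: c1; rewrite p2; case: (parity a).
move/bfar; rewrite ltdist => lt.
have := dminb _ (Qsub bin); have := ham_tri a a2 b'.
rewrite h1 -had h2 => t1 t2.
have := leq_trans t2 t1; rewrite add1n ltnS leqNgt lt //.
Qed.

Lemma part_b n : BNN (@parity n) = (2 ^ n)%N.
Proof.
rewrite /BNN; case: ex_minnP => m /asboolP [P [N [rep [sz bool]]]] mmin.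
apply/eqP; rewrite eqn_leq; apply/andP; split.
  apply: mmin; apply/asboolP; exists (full_P (@parity n)), (full_N (@parity n)).
  split; first exact: full_rep.
  split.
    rewrite /full_P /full_N !size_map !size_filter.
    have -> : (2 ^ n)%N = size (enum (bvec n)).
      by rewrite -cardT card_ffun card_bool card_ord.
    exact: count_predC.
  by move=> b; rewrite mem_cat => /orP [] /mapP [a _ ->]; exists a.
have sz' : m = size (P ++ N) by rewrite size_cat.
rewrite sz'.
have U : uniq (P ++ N).
  case: rep => uP uN dj _; rewrite cat_uniq uP uN has_sym dj //.
have -> : (2 ^ n)%N = size (map (@emb n) (enum (bvec n))).
  by rewrite size_map -cardT card_ffun card_bool card_ord.
apply: uniq_leq_size; first by rewrite (map_inj_uniq (@emb_inj n)) enum_uniq.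
move=> x /mapP [a _ ->]; exact: parity_all.
Qed.

Lemma alg (F : fieldType) (W J M : F) : M != 0 ->
  W * (1 - 2 * (J / M)) + (J / M) ^+ 2 * M - (W * (1 - 2 * (W / M)) + (W / M) ^+ 2 * M)
  = (J - W) ^+ 2 / M.
Proof. move=> hM; field. exact hM. Qed.

Definition pk n (k : nat) : pt n := \row_(i < n) (k%:R / n%:R).
Definition vk n (k : nat) : bvec n := [ffun i : 'I_n => (i < k)%N].

Lemma weight_vk n k : (k <= n)%N -> weight (vk n k) = k.
Proof.
move=> kn; rewrite /weight.
rewrite (eq_bigr (fun i : 'I_n => nat_of_bool (i < k)%N)); last by move=> i _; rewrite ffunE.
rewrite -(big_mkord xpredT (fun i => nat_of_bool (i < k)%N)).
rewrite (big_cat_nat (leq0n k) kn) /=.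
rewrite (@eq_big_nat _ _ _ 0 k _ (fun _ => 1%N)); last by move=> i /andP [_ ->].
rewrite (@eq_big_nat _ _ _ k n _ (fun _ => 0%N)); last first.
  by move=> i /andP [ki _]; rewrite ltnNge ki.
rewrite !sum_nat_const_nat muln1 muln0 subn0.
exact: addn0.
Qed.

Lemma weight_le n (a : bvec n) : (weight a <= n)%N.
Proof.
rewrite /weight; apply: leq_trans (@leq_sum _ _ _ _ (fun _ => 1%N) _) _.
  by move=> i _; case: (a i).
by rewrite sum1_card card_ord.
Qed.

Definition Sd n (a : bvec n) (x : pt n) : Rdefinitions.R :=
  \sum_i ((emb a) 0 i - x 0 i) ^+ 2.

Lemma S_eq n (a : bvec n) k :
  Sd a (pk n k) =
  (weight a)%:R * (1 - 2 * (k%:R / n%:R)) + (k%:R / n%:R) ^+ 2 * n%:R.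
Proof.
rewrite /Sd (eq_bigr (fun i => (a i : nat)%:R * (1 - 2 * (k%:R / n%:R)) + (k%:R / n%:R) ^+ 2)).
  by rewrite big_split /= -mulr_suml sumr_const card_ord /weight natr_sum mulr_natr.
move=> i _; rewrite !mxE; case: (a i) => /=; rewrite ?mulr1n ?mulr0n; ring.
Qed.

Lemma Sd_ge0 n (a : bvec n) x : 0 <= Sd a x.
Proof. by apply: sumr_ge0 => i _; exact: sqr_ge0. Qed.

Lemma pk_inj n j k : (j <= n)%N -> (k <= n)%N -> pk n j = pk n k -> j = k.
Proof.
case: n => [|n] jn kn.
  by move: jn kn; rewrite !leqn0 => /eqP -> /eqP ->.
move/matrixP => /(_ 0 ord0); rewrite !mxE => H.
have := congr1 (fun x : Rdefinitions.R => x * n.+1%:R) H; rewrite !divfK ?pnatr_eq0 //.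
by move/eqP; rewrite eqr_nat => /eqP.
Qed.

Lemma closer n (a : bvec n) j : (j <= n)%N -> j != weight a ->
  dist (emb a) (pk n (weight a)) < dist (emb a) (pk n j).
Proof.
move=> jn jw; have wn := weight_le a.
have n0 : (0 < n)%N.
  rewrite lt0n; apply: contraNneq jw => n0.
  have := leq_trans jn (eq_leq n0); have := leq_trans wn (eq_leq n0).
  by rewrite !leqn0 => /eqP -> /eqP ->.
suff H : Sd a (pk n (weight a)) < Sd a (pk n j).
  have S2p : 0 < Sd a (pk n j) by exact: le_lt_trans (Sd_ge0 _ _) H.
  rewrite /dist -/(Sd a (pk n j)) -/(Sd a (pk n (weight a))).
  by rewrite ltr_sqrt.
rewrite (S_eq a (weight a)) (S_eq a j) -subr_gt0.
have nz : (n%:R : Rdefinitions.R) != 0 by rewrite pnatr_eq0 -lt0n.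
rewrite alg //.
apply: divr_gt0; last by rewrite ltr0n.
by rewrite lt0r sqr_ge0 andbT sqrf_eq0 subr_eq0 eqr_nat.
Qed.

Lemma part_a n (f : bvec n -> bool) : symmetric_fun f -> (NN f <= n.+1)%N.
Proof.
move=> sym.
pose g k := f (vk n k).
pose P := [seq pk n k | k <- iota 0 n.+1 & g k].
pose N := [seq pk n k | k <- iota 0 n.+1 & ~~ g k].
have memI k : (k \in iota 0 n.+1) = (k <= n)%N by rewrite mem_iota add0n ltnS.
rewrite /NN; case: ex_minnP => m _ mmin; apply: mmin; apply/asboolP.
exists P, N; split; last first.
  rewrite !size_map !size_filter.
  rewrite -[in RHS](size_iota 0 n.+1).
  exact: count_predC.
have injP : {in [pred k | (k <= n)%N] &, injective (pk n)}.
  by move=> x y; rewrite !inE; exact: pk_inj.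
split.
- rewrite map_inj_in_uniq ?filter_uniq ?iota_uniq //.
  move=> x y; rewrite !mem_filter !memI => /andP [_ hx] /andP [_ hy].
  exact: pk_inj.
- rewrite map_inj_in_uniq ?filter_uniq ?iota_uniq //.
  move=> x y; rewrite !mem_filter !memI => /andP [_ hx] /andP [_ hy].
  exact: pk_inj.
- apply/hasPn => x /mapP [k]; rewrite mem_filter memI => /andP [gk kn] ->.
  apply/mapP => [[j]]; rewrite mem_filter memI => /andP [gj jn] /(pk_inj kn jn) e.
  by move: gj; rewrite -e gk.
- move=> a; have wn := weight_le a.
  have fa : f a = g (weight a) by apply: sym; rewrite weight_vk.
  split => Hf.
  + exists (pk n (weight a)).
      by apply/mapP; exists (weight a); rewrite // mem_filter memI wn -fa Hf.
    move=> c /mapP [j]; rewrite mem_filter memI => /andP [gj jn] ->.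
    apply: closer => //; apply/eqP => ejw; move: gj; by rewrite ejw -fa Hf.
  + exists (pk n (weight a)).
      by apply/mapP; exists (weight a); rewrite // mem_filter memI wn -fa Hf.
    move=> c /mapP [j]; rewrite mem_filter memI => /andP [gj jn] ->.
    apply: closer => //; apply/eqP => ejw; move: gj Hf; by rewrite ejw -fa => ->.
Qed.

Theorem proposition1 :
  (forall (n : nat) (f : bvec n -> bool), symmetric_fun f -> (NN f <= n.+1)%N) /\
  (forall n : nat, BNN (@parity n) = (2 ^ n)%N).
Proof. split; [exact: part_a | exact: part_b]. Qed.
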